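(* Let $A_1,A_2,B_1,B_2\in\mathcal{M}_n$ be such that $A_1\otimes A_2$ and $B_1\otimes B_2$ belong to the balls of diameter $[m_1I_{n^2},M_1I_{n^2}]$ and $[m_2I_{n^2},M_2I_{n^2}]$ respectively, for some $m_1,M_1,m_2,M_2\in\mathbb C$. Then $$\left|(A_1B_1)\circ(A_2B_2)-(A_1\circ A_2)(B_1\circ B_2)\right|\le\tfrac14|M_1-m_1|\,|M_2-m_2|\,I_n .$$
   Context: $X\otimes Y$ is the Kronecker (tensor) product and $X\circ Y$ the Hadamard (entrywise) product; $|X|=(X^*X)^{1/2}$. $A$ lies in the ball of diameter $[mI,MI]$ iff $\|A-\frac{M+m}{2}I\|\le\frac{|M-m|}{2}$ (operator norm). *)

(* Defs.v *)
(* Complex matrices over an arbitrary numClosedFieldType C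
   (e.g. the complex numbers); `|z| is the modulus, z^* the conjugate. *)
From HB Require Import structures.
From mathcomp Require Import all_boot all_order all_algebra all_fingroup all_character.
Set Implicit Arguments. Unset Strict Implicit. Unset Printing Implicit Defensive.
Import Order.TTheory GRing.Theory Num.Theory.
Local Open Scope ring_scope.

Definition adjmx (C : numClosedFieldType) m n (X : 'M[C]_(m, n)) : 'M[C]_(n, m) :=
  (map_mx Num.conj X)^T.

Definition kron (C : numClosedFieldType) m1 n1 m2 n2
  (A : 'M[C]_(m1, n1)) (B : 'M[C]_(m2, n2)) : 'M[C]_(m1 * m2, n1 * n2) :=
  tprod A B.

Definition hadamard (C : numClosedFieldType) m n (A B : 'M[C]_(m, n)) : 'M[C]_(m, n) :=
  \matrix_(i, j) (A i j * B i j).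

Definition vnorm (C : numClosedFieldType) n (x : 'cV[C]_n) : C :=
  sqrtC (\sum_(i < n) `|x i 0| ^+ 2).

Definition opnorm_le (C : numClosedFieldType) n (T : 'M[C]_n) (r : C) : Prop :=
  forall x : 'cV[C]_n, vnorm (T *m x) <= r * vnorm x.

(* A lies in the ball of diameter [mI, MI]:  ||A - (M+m)/2 I|| <= |M-m|/2 *)
Definition in_ball (C : numClosedFieldType) n (A : 'M[C]_n) (m M : C) : Prop :=
  opnorm_le (A - ((M + m) / 2)%:M) (`|M - m| / 2).

(* positive semidefinite (Loewner order: X <= Y iff psd (Y - X)) *)
Definition psd (C : numClosedFieldType) n (P : 'M[C]_n) : Prop :=
  forall x : 'cV[C]_n, 0 <= (adjmx x *m P *m x) 0 0.

(* P is the modulus |X| = (X^* X)^{1/2}: the psd square root of X^* X *)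
Definition is_absmx (C : numClosedFieldType) n (X P : 'M[C]_n) : Prop :=
  psd P /\ P *m P = adjmx X *m X.

(* Main.v *)
Require Import Defs.
From HB Require Import structures.
From mathcomp Require Import all_boot all_order all_algebra all_fingroup all_character.
From mathcomp Require Import zify ring.
Import Order.TTheory GRing.Theory Num.Theory.
Local Open Scope ring_scope.
Set Implicit Arguments. Unset Strict Implicit. Unset Printing Implicit Defensive.


Lemma idx_proof m n (i : 'I_m) (j : 'I_n) : (i * n + j < m * n)%N.
Proof. have := ltn_ord i; have := ltn_ord j; nia. Qed.

Definition idx m n (i : 'I_m) (j : 'I_n) : 'I_(m * n) := Ordinal (idx_proof i j).

Lemma unidx_proof0 m n (p : 'I_(m * n)) : (0 < n)%N.
Proof. case: n p => [|n] [p]; rewrite ?muln0 //. Qed.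

Lemma unidx_proof1 m n (p : 'I_(m * n)) : (p %/ n < m)%N.
Proof. by rewrite ltn_divLR ?(unidx_proof0 p). Qed.

Lemma unidx_proof2 m n (p : 'I_(m * n)) : (p %% n < n)%N.
Proof. by rewrite ltn_pmod ?(unidx_proof0 p). Qed.

Definition unidx m n (p : 'I_(m * n)) : 'I_m * 'I_n :=
  (Ordinal (unidx_proof1 p), Ordinal (unidx_proof2 p)).

Lemma idxK m n : cancel (fun ij : 'I_m * 'I_n => idx ij.1 ij.2) (@unidx m n).
Proof.
move=> [i j]; congr pair; apply/val_inj => /=.
  by rewrite divnMDl ?divn_small ?addn0 //; case: (j) => /= k hk; lia.
by rewrite modnMDl modn_small.
Qed.

Lemma unidxK m n : cancel (@unidx m n) (fun ij : 'I_m * 'I_n => idx ij.1 ij.2).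
Proof. by move=> p; apply/val_inj => /=; rewrite -divn_eq. Qed.

Lemma idx_inj m n (i i' : 'I_m) (j j' : 'I_n) :
  (idx i j == idx i' j') = (i == i') && (j == j').
Proof.
apply/eqP/andP => [h|[/eqP -> /eqP ->] //].
by have := congr1 (@unidx m n) h; rewrite (idxK (i, j)) (idxK (i', j')) => -[-> ->].
Qed.

Lemma sum_idx (R : nmodType) m n (F : 'I_(m * n) -> R) :
  \sum_p F p = \sum_i \sum_j F (idx i j).
Proof.
rewrite (reindex (fun ij : 'I_m * 'I_n => idx ij.1 ij.2)) /=; last first.
  by exists (@unidx m n) => p _; [exact: idxK | exact: unidxK].
by rewrite pair_big.
Qed.

Section Tens.
Variable F : fieldType.

Lemma trowE n1 m2 n2 (a : 'rV[F]_n1) (B : 'M[F]_(m2, n2)) i j1 j2 :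
  trow a B i (idx j1 j2) = a 0 j1 * B i j2.
Proof.
elim: n1 a j1 => [|n1 IH] a j1; first by case: j1.
rewrite /= mxE; case: splitP => k hk.
  have j10 : val j1 = 0%N by move: hk (ltn_ord k) => /=; nia.
  have -> : k = j2 by apply/val_inj; move: hk => /= <-; rewrite j10.
  rewrite !mxE; congr (a _ _ * _); apply/val_inj => /=; by rewrite j10.
have j1pos : (0 < j1)%N by move: hk (ltn_ord j2) => /=; nia.
have hj : (j1.-1 < n1)%N by have := ltn_ord j1; lia.
have -> : k = idx (Ordinal hj) j2.
  by apply/val_inj => /=; move: hk => /=; nia.
rewrite IH mxE; congr (a _ _ * _).
by apply/val_inj => /=; lia.
Qed.

Lemma tprodE_entry m1 n1 m2 n2 (A : 'M[F]_(m1, n1)) (B : 'M[F]_(m2, n2)) i1 i2 j1 j2 :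
  tprod A B (idx i1 i2) (idx j1 j2) = A i1 j1 * B i2 j2.
Proof.
elim: m1 A i1 => [|m1 IH] A i1; first by case: i1.
rewrite /= mxE; case: splitP => k hk.
  have i10 : val i1 = 0%N by move: hk (ltn_ord k) => /=; nia.
  have -> : k = i2 by apply/val_inj; move: hk => /= <-; rewrite i10.
  rewrite trowE mxE; congr (A _ _ * _); apply/val_inj => /=.
  by rewrite i10.
have i1pos : (0 < i1)%N by move: hk (ltn_ord i2) => /=; nia.
have hi : (i1.-1 < m1)%N by have := ltn_ord i1; lia.
have -> : k = idx (Ordinal hi) i2.
  by apply/val_inj => /=; move: hk => /=; nia.
rewrite IH mxE; congr (A _ _ * _).
by apply/val_inj => /=; lia.
Qed.
End Tens.


Section J.
Variable C : numClosedFieldType.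
Variable n : nat.

Definition Jm : 'M[C]_(n * n, n) := \matrix_(p, k) ((p == idx k k)%:R).

Lemma J_entry i j k : Jm (idx i j) k = ((i == k) && (j == k))%:R.
Proof. by rewrite mxE idx_inj. Qed.

Lemma JtM m (M : 'M[C]_(n * n, m)) i q : (Jm^T *m M) i q = M (idx i i) q.
Proof.
rewrite mxE (bigD1 (idx i i)) //= !mxE eqxx mul1r big1 ?addr0 // => p /negbTE hp.
by rewrite !mxE hp mul0r.
Qed.

Lemma MJ m (M : 'M[C]_(m, n * n)) p j : (M *m Jm) p j = M p (idx j j).
Proof.
rewrite mxE (bigD1 (idx j j)) //= !mxE eqxx mulr1 big1 ?addr0 // => q /negbTE hq.
by rewrite !mxE hq mulr0.
Qed.

Lemma JM m (w : 'M[C]_(n, m)) i j c :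
  (Jm *m w) (idx i j) c = if i == j then w i c else 0.
Proof.
rewrite mxE (bigD1 i) //= J_entry eqxx /= big1 => [|k /negbTE hk]; last first.
  by rewrite J_entry eq_sym hk mul0r.
rewrite addr0; case: (eqVneq i j) => [->|h]; first by rewrite mul1r.
by rewrite mul0r.
Qed.

Lemma JtJ : Jm^T *m Jm = 1%:M.
Proof. by apply/matrixP => i j; rewrite JtM J_entry andbb mxE. Qed.

Definition Km : 'M[C]_(n * n) := 1%:M - Jm *m Jm^T.

Lemma KJ : Km *m Jm = 0.
Proof. by rewrite /Km mulmxBl mul1mx -mulmxA JtJ mulmx1 subrr. Qed.

Lemma JtK : Jm^T *m Km = 0.
Proof. by rewrite /Km mulmxBr mulmx1 mulmxA JtJ mul1mx subrr. Qed.

Lemma had_J (A B : 'M[C]_n) : hadamard A B = Jm^T *m kron A B *m Jm.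
Proof.
apply/matrixP => i j; rewrite MJ JtM /kron tprodE_entry mxE //.
Qed.

Lemma D_eq (A1 A2 B1 B2 : 'M[C]_n) (a b : C) :
  hadamard (A1 *m B1) (A2 *m B2) - hadamard A1 A2 *m hadamard B1 B2 =
  Jm^T *m ((kron A1 A2 - a%:M) *m (Km *m ((kron B1 B2 - b%:M) *m Jm))).
Proof.
rewrite !had_J /kron tprodE.
set X := tprod A1 A2; set Y := tprod B1 B2.
rewrite (mulmxBl Y) mul_scalar_mx mulmxBr -scalemxAr KJ scaler0 subr0.
rewrite mulmxBl mul_scalar_mx mulmxBr -scalemxAr !mulmxA JtK !mul0mx scaler0 subr0.
rewrite /Km mulmxBr mulmxBl mulmx1 !mulmxA.
by rewrite mulmxBl.
Qed.

Definition ssq m (v : 'cV[C]_m) : C := \sum_(i < m) `|v i 0| ^+ 2.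

Lemma ssq_ge0 m (v : 'cV[C]_m) : 0 <= ssq v.
Proof. by apply: sumr_ge0 => i _; rewrite exprn_ge0. Qed.

Lemma vnormE m (v : 'cV[C]_m) : vnorm v = sqrtC (ssq v).
Proof. by []. Qed.

Lemma vnorm_ge0 m (v : 'cV[C]_m) : 0 <= vnorm v.
Proof. by rewrite vnormE sqrtC_ge0 ssq_ge0. Qed.

Lemma vnorm_le m1 m2 (u : 'cV[C]_m1) (v : 'cV[C]_m2) : ssq u <= ssq v -> vnorm u <= vnorm v.
Proof. by rewrite !vnormE ler_sqrtC // nnegrE ssq_ge0. Qed.

Lemma ssq_Jt (v : 'cV[C]_(n * n)) : ssq (Jm^T *m v) <= ssq v.
Proof.
rewrite /ssq sum_idx; apply: ler_sum => i _.
rewrite JtM (bigD1 i) //= lerDl; apply: sumr_ge0 => j _; exact: exprn_ge0.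
Qed.

Lemma ssq_K (v : 'cV[C]_(n * n)) : ssq (Km *m v) <= ssq v.
Proof.
rewrite /ssq !sum_idx; apply: ler_sum => i _; apply: ler_sum => j _.
rewrite /Km mulmxBl mul1mx -mulmxA.
have -> : (v - Jm *m (Jm^T *m v)) (idx i j) 0 = v (idx i j) 0 - (Jm *m (Jm^T *m v)) (idx i j) 0.
  by rewrite !mxE.
rewrite JM.
case: eqVneq => [<-|_]; last by rewrite subr0.
rewrite JtM subrr normr0 expr0n /=; exact: exprn_ge0.
Qed.

Lemma ssq_J (x : 'cV[C]_n) : ssq (Jm *m x) = ssq x.
Proof.
rewrite /ssq sum_idx; apply: eq_bigr => i _.
rewrite (bigD1 i) //= JM eqxx big1 ?addr0 // => j /negbTE hj.
by rewrite JM eq_sym hj normr0 expr0n.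
Qed.
End J.


Section Dot.
Variable C : numClosedFieldType.

Definition dot n (u w : 'cV[C]_n) : C := (adjmx u *m w) 0 0.

Lemma adjmxM m n p (A : 'M[C]_(m, n)) (B : 'M[C]_(n, p)) :
  adjmx (A *m B) = adjmx B *m adjmx A.
Proof.
apply/matrixP => i j; rewrite !mxE rmorph_sum; apply: eq_bigr => k _.
by rewrite !mxE rmorphM mulrC.
Qed.

Lemma adjmxK m n (A : 'M[C]_(m, n)) : adjmx (adjmx A) = A.
Proof. by apply/matrixP => i j; rewrite !mxE conjCK. Qed.

Lemma adjmxB m n (A B : 'M[C]_(m, n)) : adjmx (A - B) = adjmx A - adjmx B.
Proof. by apply/matrixP => i j; rewrite !mxE rmorphB. Qed.

Lemma dotDl n (u1 u2 w : 'cV[C]_n) : dot (u1 + u2) w = dot u1 w + dot u2 w.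
Proof.
rewrite /dot !mxE -big_split /=; apply: eq_bigr => k _.
by rewrite !mxE rmorphD mulrDl.
Qed.

Lemma dotDr n (u w1 w2 : 'cV[C]_n) : dot u (w1 + w2) = dot u w1 + dot u w2.
Proof. by rewrite /dot mulmxDr mxE. Qed.

Lemma dotZl n c (u w : 'cV[C]_n) : dot (c *: u) w = c^* * dot u w.
Proof.
rewrite /dot !mxE mulr_sumr; apply: eq_bigr => k _.
by rewrite !mxE rmorphM mulrA.
Qed.

Lemma dotZr n c (u w : 'cV[C]_n) : dot u (c *: w) = c * dot u w.
Proof. by rewrite /dot -scalemxAr mxE. Qed.

Lemma dotBr n (u w1 w2 : 'cV[C]_n) : dot u (w1 - w2) = dot u w1 - dot u w2.
Proof. by rewrite /dot mulmxBr mxE [in X in _ + X]mxE. Qed.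

Lemma dot_ssq n (u : 'cV[C]_n) : dot u u = ssq u.
Proof.
rewrite /dot /ssq mxE; apply: eq_bigr => k _.
by rewrite !mxE normCK mulrC.
Qed.

Lemma dotC n (u w : 'cV[C]_n) : (dot u w)^* = dot w u.
Proof.
rewrite /dot !mxE rmorph_sum; apply: eq_bigr => k _.
by rewrite !mxE rmorphM mulrC; congr (_ * _); exact: conjCK.
Qed.

Lemma dot_mul n (M : 'M[C]_n) (u w : 'cV[C]_n) :
  dot (M *m u) w = dot u (adjmx M *m w).
Proof. by rewrite /dot adjmxM mulmxA. Qed.

Lemma dot_e n (a : 'I_n) (w : 'cV[C]_n) : dot (delta_mx a 0) w = w a 0.
Proof.
rewrite /dot mxE (bigD1 a) //= big1 ?addr0 => [|k hk]; rewrite !mxE.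
  by rewrite !eqxx /= rmorph1 mul1r.
by rewrite (negbTE hk) /= rmorph0 mul0r.
Qed.

Lemma Q_e n (Q : 'M[C]_n) a b : (Q *m (delta_mx b 0 : 'cV[C]_n)) a 0 = Q a b.
Proof. by rewrite -(colE b Q) mxE. Qed.

Lemma psd_form n (P : 'M[C]_n) x : (adjmx x *m P *m x) 0 0 = dot x (P *m x).
Proof. by rewrite /dot mulmxA. Qed.

Lemma psd_herm n (P : 'M[C]_n) : psd P -> adjmx P = P.
Proof.
move=> hP.
have hQ : forall x, dot x ((P - adjmx P) *m x) = 0.
  move=> x; rewrite mulmxBl dotBr -dot_mul -[dot (P *m x) x]dotC.
  have := hP x; rewrite psd_form => /geC0_conj ->; exact: subrr.
set Q := P - adjmx P in hQ.
suff : Q = 0 by move/eqP; rewrite subr_eq0 => /eqP.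
apply/matrixP => a b; rewrite [RHS]mxE.
have E c : dot (delta_mx a 0 + c *: delta_mx b 0) (Q *m (delta_mx a 0 + c *: delta_mx b 0))
   = Q a a + c * Q a b + c^* * Q b a + c^* * c * Q b b.
  rewrite mulmxDr -scalemxAr !dotDl !dotDr !dotZl !dotZr !dot_e !Q_e.
  by rewrite mulrA; ring.
have Qaa : Q a a = 0 by have := hQ (delta_mx a 0); rewrite dot_e Q_e.
have Qbb : Q b b = 0 by have := hQ (delta_mx b 0); rewrite dot_e Q_e.
have h1 := hQ (delta_mx a 0 + 1 *: delta_mx b 0).
have h2 := hQ (delta_mx a 0 + 'i *: delta_mx b 0).
rewrite E Qaa Qbb rmorph1 in h1; rewrite E Qaa Qbb conjCi in h2.
have h3 : 'i * (Q a b - Q b a) = 0.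
  by rewrite -h2; ring.
move/eqP: h3; rewrite mulf_eq0 (negbTE (neq0Ci C)) /= subr_eq0 => /eqP h3.
rewrite h3.
have h4 : Q b a *+ 2 = 0.
  by rewrite -h1 h3; ring.
by move/eqP: h4; rewrite mulrn_eq0 /= => /eqP.
Qed.
End Dot.


Section Fin.
Variable C : numClosedFieldType.

Lemma dotBl n (u1 u2 w : 'cV[C]_n) : dot (u1 - u2) w = dot u1 w - dot u2 w.
Proof.
rewrite /dot !mxE -sumrB /=; apply: eq_bigr => k _.
by rewrite !mxE rmorphB mulrBl.
Qed.

Lemma abs_bound n (P D : 'M[C]_n) (R : C) :
  psd P -> P *m P = adjmx D *m D -> 0 <= R ->
  (forall x, vnorm (D *m x) <= R * vnorm x) -> psd (R%:M - P).
Proof.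
move=> hP hPP hR hD x.
rewrite psd_form mulmxBl mul_scalar_mx dotBr dotZr.
have hherm := psd_herm hP.
have ha : 0 <= dot x (P *m x) by have := hP x; rewrite psd_form.
have hs : 0 <= dot x x by rewrite dot_ssq ssq_ge0.
have hb : dot (P *m x) (P *m x) <= R ^+ 2 * dot x x.
  rewrite dot_mul hherm mulmxA hPP -mulmxA -dot_mul !dot_ssq.
  have := hD x; rewrite -(ler_pXn2r (n:=2)) // ?nnegrE ?vnorm_ge0 ?mulr_ge0 ?vnorm_ge0 //.
  by rewrite exprMn !vnormE !sqrtCK.
have hPx : dot (P *m x) x = dot x (P *m x) by rewrite -dotC geC0_conj.
have hsr : (dot x x)^* = dot x x := geC0_conj hs.
have har : (dot x (P *m x))^* = dot x (P *m x) := geC0_conj ha.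
move: ha hs hb hPx hsr har.
set a := dot x (P *m x); set s := dot x x; set b := dot (P *m x) (P *m x).
move=> ha hs hb hPx hsr har.
have [s0|s0] := eqVneq s 0.
  have hw := ssq_ge0 (P *m x - x).
  rewrite -dot_ssq !dotBl !dotBr -/a -/b -/s hPx s0 in hw.
  rewrite s0 mulr0 in hb.
  have h2 : a + a <= b.
    by rewrite -subr_ge0 opprD addrA; move: hw; rewrite subr0.
  have : a <= 0 by apply: le_trans (le_trans h2 hb); rewrite lerDl.
  by rewrite s0 mulr0 sub0r oppr_ge0.
have spos : 0 < s by rewrite lt_def s0 hs.
have hw := ssq_ge0 (s *: (P *m x) - a *: x).
rewrite -dot_ssq !dotBl !dotBr !dotZl !dotZr -/a -/b -/s hPx hsr har in hw.
have E' : s * (s * b) - s * (a * a) - (a * (s * a) - a * (a * s)) = s * (s * b - a ^+ 2) by ring.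
rewrite E' pmulr_rge0 // subr_ge0 in hw.
have h3 : a ^+ 2 <= (R * s) ^+ 2.
  have -> : (R * s) ^+ 2 = s * (R ^+ 2 * s) by ring.
  by apply: le_trans hw _; rewrite ler_wpM2l.
move: h3; rewrite ler_pXn2r // ?nnegrE ?mulr_ge0 // => h3.
by rewrite subr_ge0.
Qed.
End Fin.

Unset Implicit Arguments.

Theorem mainTheorem12 (C : numClosedFieldType) (n : nat)
    (A1 A2 B1 B2 : 'M[C]_n) (m1 M1 m2 M2 : C) :
  in_ball (kron A1 A2) m1 M1 ->
  in_ball (kron B1 B2) m2 M2 ->
  forall P : 'M[C]_n,
    is_absmx (hadamard (A1 *m B1) (A2 *m B2) - hadamard A1 A2 *m hadamard B1 B2) P ->
    psd ((`|M1 - m1| * `|M2 - m2| / 4)%:M - P).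
Proof.
move=> h1 h2 P [hP hPP].
rewrite (D_eq A1 A2 B1 B2 ((M1 + m1) / 2) ((M2 + m2) / 2)) in hPP.
have r1 : 0 <= `|M1 - m1| / 2 by rewrite divr_ge0.
have r2 : 0 <= `|M2 - m2| / 2 by rewrite divr_ge0.
have -> : `|M1 - m1| * `|M2 - m2| / 4 = (`|M1 - m1| / 2) * (`|M2 - m2| / 2).
  by field.
apply: (abs_bound hP hPP); first exact: mulr_ge0.
move=> x; rewrite -!mulmxA.
apply: le_trans (vnorm_le (ssq_Jt _)) _.
apply: le_trans (h1 _) _.
rewrite -[X in _ <= X]mulrA ler_wpM2l //.
apply: le_trans (vnorm_le (ssq_K _)) _.
apply: le_trans (h2 _) _.
by rewrite !vnormE ssq_J.
Qed.
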